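(* Let $K$ be an algebraically closed field of characteristic zero, $\deg_1$ the weighted degree on $K[x_1,\dots,x_n]$ assigning positive real weights $w_i$ to $x_i$, $\Phi=(f_1,\dots,f_n)$ a polynomial automorphism of $K^n$, $\Phi^{-1}=(g_1,\dots,g_n)$, $d_i=\deg_1(f_i)$, $\deg_2$ the weighted degree assigning weight $d_i$ to $x_i$, $\Delta_i(P)=\mathrm{j}(g_1,\dots,g_{i-1},P,g_{i+1},\dots,g_n)$, and $I=\{Q : Q(\overline{f_1},\dots,\overline{f_n})=0\}$. Let $i$ be an index with $\deg_2(\Delta_i)\ge -w_i$. Then the leading part $\overline{\Delta_i}$ of $\Delta_i$ with respect to $\deg_2$ is locally nilpotent and satisfies $\overline{\Delta_i}(I)\subset I$.
   Context: $\mathrm{j}$ is the jacobian determinant; $\overline{f}$ is the $\deg_1$-leading term of $f$. For a p.w.h. degree $\deg$ and a $K$-derivation $\partial$, $\deg(\partial)=\sup\{\deg(\partial(P))-\deg(P):P\ne0\}$, and the leading part $\overline{\partial}$ is the $K$-derivation sending each $\deg$-homogeneous $P$ to the homogeneous component of $\partial(P)$ of degree $\deg(\partial)+\deg(P)$; equivalently if $\partial=\sum a_i\partial/\partial x_i$ and $r=\deg(\partial)$ then $\overline{\partial}=\sum b_i\partial/\partial x_i$ with $b_i$ the homogeneous component of $a_i$ of degree $r+\deg(x_i)$. *)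

(* Defs.v *)
From HB Require Import structures.
From mathcomp Require Import all_boot all_order all_algebra.
From mathcomp Require Export mpoly.
Set Implicit Arguments. Unset Strict Implicit. Unset Printing Implicit Defensive.
Import Order.TTheory GRing.Theory Num.Theory.
Local Open Scope ring_scope.

Section Defs.
Variables (K : fieldType) (R : realFieldType) (n : nat).

Definition mwdeg (w : 'I_n -> R) (m : 'X_{1..n}) : R :=
  \sum_(i < n) w i * (m i)%:R.

(* weighted degree of a polynomial (meaningful for P != 0; it is the max of
   the weighted degrees of the monomials in the support) *)
Definition wdeg (w : 'I_n -> R) (P : {mpoly K[n]}) : R :=
  \big[Num.max/mwdeg w (head 0%MM (msupp P))]_(m <- msupp P) mwdeg w m.

Definition hcomp (w : 'I_n -> R) (e : R) (P : {mpoly K[n]}) : {mpoly K[n]} :=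
  \sum_(m <- msupp P | mwdeg w m == e) P@_m *: 'X_[m].

Definition wlead (w : 'I_n -> R) (P : {mpoly K[n]}) : {mpoly K[n]} :=
  hcomp w (wdeg w P) P.

Definition jac (F : n.-tuple {mpoly K[n]}) : {mpoly K[n]} :=
  \det (\matrix_(k < n, l < n) (tnth F k)^`M(l)).

Definition poly_inverse (F G : n.-tuple {mpoly K[n]}) : Prop :=
  (forall k : 'I_n, tnth F k \mPo G = 'X_k) /\
  (forall k : 'I_n, tnth G k \mPo F = 'X_k).

Definition Delta (G : n.-tuple {mpoly K[n]}) (i : 'I_n) (P : {mpoly K[n]})
  : {mpoly K[n]} :=
  jac [tuple if k == i then P else tnth G k | k < n].

(* deg(D) = sup { deg(D P) - deg(P) : P != 0 }  (terms with D P = 0 have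
   degree -oo and do not contribute); [is_der_deg w D r] says this sup is the
   real number r. *)
Definition is_der_deg (w : 'I_n -> R) (D : {mpoly K[n]} -> {mpoly K[n]})
  (r : R) : Prop :=
  (forall P, P != 0 -> D P != 0 -> wdeg w (D P) - wdeg w P <= r) /\
  (forall s, (forall P, P != 0 -> D P != 0 -> wdeg w (D P) - wdeg w P <= s)
       -> r <= s).

(* leading part of D of degree r: on a homogeneous P of degree e it is the
   component of D P of degree r + e; extended by linearity (monomial-wise). *)
Definition lead_der (w : 'I_n -> R) (D : {mpoly K[n]} -> {mpoly K[n]})
  (r : R) (P : {mpoly K[n]}) : {mpoly K[n]} :=
  \sum_(m <- msupp P) P@_m *: hcomp w (r + mwdeg w m) (D 'X_[m]).

Definition locally_nilpotent (D : {mpoly K[n]} -> {mpoly K[n]}) : Prop :=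
  forall P, exists k : nat, iter k D P = 0.

End Defs.

(* Main.v *)
Require Import Defs.
From HB Require Import structures.
From mathcomp Require Import all_boot all_order all_algebra.
From mathcomp Require Import mpoly.
From mathcomp Require Import ring lra.
Set Implicit Arguments. Unset Strict Implicit. Unset Printing Implicit Defensive.
Import Order.TTheory GRing.Theory Num.Theory.
Local Open Scope ring_scope.


Section W.
Variables (K : fieldType) (R : realFieldType) (n : nat) (v : 'I_n -> R).
Implicit Types (P Q A B : {mpoly K[n]}) (m : 'X_{1..n}).

Lemma mwdeg0 : mwdeg v 0%MM = 0.
Proof. by rewrite /mwdeg big1 // => i _; rewrite mnm0E mulr0. Qed.

Lemma mwdegD m1 m2 : mwdeg v (m1 + m2)%MM = mwdeg v m1 + mwdeg v m2.
Proof. by rewrite /mwdeg -big_split; apply: eq_bigr => i _; rewrite mnmDE natrD mulrDr. Qed.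

Lemma mwdegU k : mwdeg v U_(k)%MM = v k.
Proof.
rewrite /mwdeg (bigD1 k) //= mnm1E eqxx mulr1 big1 ?addr0 // => j /negbTE.
by rewrite mnm1E eq_sym => ->; rewrite mulr0.
Qed.

Lemma mcoeff_hcomp e P m :
  (hcomp v e P)@_m = if mwdeg v m == e then P@_m else 0.
Proof.
rewrite /hcomp raddf_sum /= big_mkcond /=.
under eq_bigr do rewrite mcoeffZ mcoeffX.
case: (boolP (m \in msupp P)) => hm.
  rewrite (bigD1_seq m) ?msupp_uniq //= eqxx mulr1 big1 ?addr0 //.
  by move=> j /negbTE ->; rewrite mulr0 if_same.
rewrite big1_seq; first by rewrite (memN_msupp_eq0 hm) if_same.
move=> j /andP[_ hj]; case: ifP => // _; case: eqP => [ej|]; last by rewrite mulr0.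
by move: hj; rewrite ej (negbTE hm).
Qed.

Lemma hcompD e P Q : hcomp v e (P + Q) = hcomp v e P + hcomp v e Q.
Proof. by apply/mpolyP => m; rewrite mcoeffD !mcoeff_hcomp mcoeffD; case: ifP; rewrite ?addr0. Qed.

Lemma hcompZ e c P : hcomp v e (c *: P) = c *: hcomp v e P.
Proof. by apply/mpolyP => m; rewrite mcoeffZ !mcoeff_hcomp mcoeffZ; case: ifP; rewrite ?mulr0. Qed.

Lemma hcomp_linear e : linear (@hcomp K R n v e).
Proof. by move=> c P Q; rewrite hcompD hcompZ. Qed.

HB.instance Definition _ e := GRing.isLinear.Build K {mpoly K[n]} {mpoly K[n]} _ (@hcomp K R n v e) (hcomp_linear e).

Lemma hcompK e P : hcomp v e (hcomp v e P) = hcomp v e P.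
Proof. by apply/mpolyP => m; rewrite !mcoeff_hcomp; case: (mwdeg v m == e). Qed.

Lemma hcompX e m : hcomp v e 'X_[K, m] = if mwdeg v m == e then 'X_[m] else 0.
Proof.
apply/mpolyP => m'; rewrite mcoeff_hcomp (fun_if (mcoeff m')) mcoeffX mcoeff0.
by have [->|/negbTE ne] := eqVneq m m'; rewrite ?ne ?if_same.
Qed.

Definition ubw b P := forall m, b < mwdeg v m -> P@_m = 0.
Definition ltw b P := forall m, b <= mwdeg v m -> P@_m = 0.

Lemma ub_hcomp0 b e P : ubw b P -> b < e -> hcomp v e P = 0.
Proof.
move=> h be; apply/mpolyP => m; rewrite mcoeff_hcomp mcoeff0.
by case: eqP => // em; apply: h; rewrite em.
Qed.

Lemma lt_hcomp0 b e P : ltw b P -> b <= e -> hcomp v e P = 0.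
Proof.
move=> h be; apply/mpolyP => m; rewrite mcoeff_hcomp mcoeff0.
by case: eqP => // em; apply: h; rewrite em.
Qed.

Lemma ub_lt b P : ubw b P -> hcomp v b P = 0 -> ltw b P.
Proof.
move=> h h0 m; rewrite le_eqVlt => /orP[/eqP e|]; last exact: h.
by have := congr1 (mcoeff m) h0; rewrite mcoeff_hcomp -e eqxx mcoeff0.
Qed.

Lemma ub_sub_hcomp b P : ubw b P -> ltw b (P - hcomp v b P).
Proof.
move=> h m hm; rewrite mcoeffB mcoeff_hcomp; case: eqP => [_|]; first by rewrite subrr.
by move=> ne; rewrite h ?subr0 // lt_def hm andbT; apply/eqP.
Qed.

Lemma hcomp_homog e P : ubw e (hcomp v e P).
Proof. by move=> m hm; rewrite mcoeff_hcomp gt_eqF. Qed.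

Lemma hcomp_other e e' P : e != e' -> hcomp v e (hcomp v e' P) = 0.
Proof. by move=> ne; apply/mpolyP => m; rewrite !mcoeff_hcomp mcoeff0; case: eqP => // ->; rewrite (negbTE ne). Qed.

Lemma ub_msupp b P m : ubw b P -> m \in msupp P -> mwdeg v m <= b.
Proof. by move=> h; rewrite mcoeff_msupp; apply: contraR; rewrite -ltNge => /h ->. Qed.

Lemma lt_msupp b P m : ltw b P -> m \in msupp P -> mwdeg v m < b.
Proof. by move=> h; rewrite mcoeff_msupp; apply: contraR; rewrite -leNgt => /h ->. Qed.

Lemma le_bigmax_s (s : seq 'X_{1..n}) x0 x : x \in s ->
  mwdeg v x <= \big[Num.max/x0]_(y <- s) mwdeg v y.
Proof.
elim: s => //= y s IH; rewrite inE big_cons => /orP[/eqP->|/IH h].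
  by rewrite le_max lexx.
by rewrite le_max h orbT.
Qed.

Lemma bigmax_le_s (s : seq 'X_{1..n}) x0 b : x0 <= b ->
  (forall y, y \in s -> mwdeg v y <= b) -> \big[Num.max/x0]_(y <- s) mwdeg v y <= b.
Proof.
move=> hx; elim: s => [|y s IH] h; first by rewrite big_nil.
rewrite big_cons ge_max h ?mem_head //=; apply: IH => z hz; by apply: h; rewrite inE hz orbT.
Qed.

Lemma bigmax_lt_s (s : seq 'X_{1..n}) x0 b : x0 < b ->
  (forall y, y \in s -> mwdeg v y < b) -> \big[Num.max/x0]_(y <- s) mwdeg v y < b.
Proof.
move=> hx; elim: s => [|y s IH] h; first by rewrite big_nil.
rewrite big_cons gt_max h ?mem_head //=; apply: IH => z hz; by apply: h; rewrite inE hz orbT.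
Qed.

Lemma ub_wdeg P : ubw (wdeg v P) P.
Proof.
move=> m hm; apply/eqP; rewrite mcoeff_eq0; apply: contraTN hm => hm.
by rewrite -leNgt /wdeg le_bigmax_s.
Qed.

Lemma head_msupp P : P != 0 -> head 0%MM (msupp P) \in msupp P.
Proof. by rewrite -msupp_eq0; case: (msupp P) => //= a l _; rewrite mem_head. Qed.

Lemma wdeg_le b P : P != 0 -> ubw b P -> wdeg v P <= b.
Proof.
move=> nz h; apply: bigmax_le_s; first exact/(ub_msupp h)/head_msupp.
by move=> y; apply: ub_msupp.
Qed.

Lemma wdeg_lt b P : P != 0 -> ltw b P -> wdeg v P < b.
Proof.
move=> nz h; apply: bigmax_lt_s; first exact/(lt_msupp h)/head_msupp.
by move=> y; apply: lt_msupp.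
Qed.

Lemma ub_le b b' P : b <= b' -> ubw b P -> ubw b' P.
Proof. by move=> le h m hm; apply: h; apply: le_lt_trans hm. Qed.

Lemma lt_le b b' P : b <= b' -> ltw b P -> ltw b' P.
Proof. by move=> le h m hm; apply: h; apply: le_trans hm. Qed.

Lemma lt_ub b P : ltw b P -> ubw b P.
Proof. by move=> h m hm; apply/h/ltW. Qed.

End W.


Section W2.
Variables (K : fieldType) (R : realFieldType) (n : nat).
Implicit Types (P Q A B : {mpoly K[n]}) (m : 'X_{1..n}) (v w : 'I_n -> R).

Lemma hcompE v e P : hcomp v e P =
  \sum_(m <- msupp P) (if mwdeg v m == e then P@_m else 0) *: 'X_[m].
Proof. by rewrite /hcomp big_mkcond; apply: eq_bigr => m _; case: ifP; rewrite ?scale0r. Qed.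

Lemma ubw0 v b : ubw v b (0 : {mpoly K[n]}).
Proof. by move=> m _; rewrite mcoeff0. Qed.

Lemma ubwD v b P Q : ubw v b P -> ubw v b Q -> ubw v b (P + Q).
Proof. by move=> hP hQ m hm; rewrite mcoeffD hP ?hQ ?addr0. Qed.

Lemma ubwZ v b c P : ubw v b P -> ubw v b (c *: P).
Proof. by move=> hP m hm; rewrite mcoeffZ hP ?mulr0. Qed.

Lemma ubw_sum v b (I : eqType) (s : seq I) (F : I -> {mpoly K[n]}) :
  (forall i, i \in s -> ubw v b (F i)) -> ubw v b (\sum_(i <- s) F i).
Proof.
elim: s => [|x s IH] h; first by rewrite big_nil; exact: ubw0.
rewrite big_cons; apply: ubwD; first by apply: h; rewrite mem_head.
by apply: IH => i hi; apply: h; rewrite inE hi orbT.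
Qed.

Lemma ltwD v b P Q : ltw v b P -> ltw v b Q -> ltw v b (P + Q).
Proof. by move=> hP hQ m hm; rewrite mcoeffD hP ?hQ ?addr0. Qed.

Lemma ltwZ v b c P : ltw v b P -> ltw v b (c *: P).
Proof. by move=> hP m hm; rewrite mcoeffZ hP ?mulr0. Qed.

Lemma ubwX v m : ubw v (mwdeg v m) ('X_[m] : {mpoly K[n]}).
Proof. move=> m' hm; rewrite mcoeffX; case: eqP => // e; by rewrite e ltxx in hm. Qed.

Lemma add_eq_le (x y a b : R) : x <= a -> y <= b ->
  (x + y == a + b) = (x == a) && (y == b).
Proof.
move=> xa yb; have [->|ne] := eqVneq x a; first by rewrite (inj_eq (addrI a)).
apply/negbTE; rewrite lt_eqF //; apply: ltr_leD => //; rewrite lt_def eq_sym ne xa //=.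
Qed.

Lemma ubwM w a b A B : ubw w a A -> ubw w b B ->
  ubw w (a + b) (A * B) /\ hcomp w (a + b) (A * B) = hcomp w a A * hcomp w b B.
Proof.
move=> hA hB; split.
  move=> m hm; rewrite mpolyME raddf_sum /= big1_seq // => mm /andP[_ /allpairsP[[m1 m2] [/= h1 h2 ->]]].
  rewrite mcoeffZ mcoeffX /=; case: eqP; rewrite ?mulr0 // => e.
  move: hm; rewrite -e mwdegD => hm; exfalso.
  have := lerD (ub_msupp hA h1) (ub_msupp hB h2); by rewrite leNgt hm.
rewrite mpolyME linear_sum /= !hcompE big_distrl /= big_allpairs.
apply: eq_big_seq => m1 h1; rewrite big_distrr /=; apply: eq_big_seq => m2 h2.
rewrite linearZ /= hcompX mwdegD add_eq_le ?(ub_msupp hA h1) ?(ub_msupp hB h2) //.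
rewrite -scalerAr -scalerAl -mpolyXD scalerA.
case: ifP => E1; first by case/andP: E1 => -> ->; rewrite mulrC.
by rewrite scaler0; move: E1; do 2 case: ifP => _ //=; rewrite ?mulr0 ?mul0r scale0r.
Qed.

Lemma ubw1 w : ubw w 0 (1 : {mpoly K[n]}) /\ hcomp w 0 (1 : {mpoly K[n]}) = 1.
Proof.
rewrite -mpolyX0; split; first by have := (@ubwX w 0%MM); rewrite mwdeg0.
by rewrite hcompX mwdeg0 eqxx.
Qed.

Lemma ubwX_pow w a A j : ubw w a A ->
  ubw w (a *+ j) (A ^+ j) /\ hcomp w (a *+ j) (A ^+ j) = (hcomp w a A) ^+ j.
Proof.
move=> hA; elim: j => [|j [IH1 IH2]]; first by rewrite !expr0 mulr0n; exact: ubw1.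
by rewrite !exprS mulrS; have [h1 h2] := ubwM hA IH1; rewrite h2 IH2.
Qed.

Lemma ubw_prod w (s : seq 'I_n) (a : 'I_n -> R) (F : 'I_n -> {mpoly K[n]}) :
  (forall k, ubw w (a k) (F k)) ->
  ubw w (\sum_(k <- s) a k) (\prod_(k <- s) F k) /\
  hcomp w (\sum_(k <- s) a k) (\prod_(k <- s) F k) = \prod_(k <- s) hcomp w (a k) (F k).
Proof.
move=> hF; elim: s => [|k s [IH1 IH2]]; first by rewrite !big_nil; exact: ubw1.
by rewrite !big_cons; have [h1 h2] := ubwM (@hF k) IH1; rewrite h2 IH2.
Qed.

Section Comp.
Variables (w v2 : 'I_n -> R) (Fp : n.-tuple {mpoly K[n]}).
Hypothesis hF : forall k, ubw w (v2 k) (tnth Fp k).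
Let Fb := [tuple hcomp w (v2 k) (tnth Fp k) | k < n].

Lemma comp_monom m :
  ubw w (mwdeg v2 m) ('X_[m] \mPo Fp) /\
  hcomp w (mwdeg v2 m) ('X_[m] \mPo Fp) = 'X_[m] \mPo Fb.
Proof.
have [h1 h2] := @ubw_prod w (index_enum 'I_n) (fun k => v2 k *+ m k) (fun k => tnth Fp k ^+ m k)
  (fun k => (ubwX_pow (m k) (@hF k)).1).
have eD : mwdeg v2 m = \sum_(k <- index_enum 'I_n) v2 k *+ m k.
  by rewrite /mwdeg; apply: eq_bigr => k _; rewrite mulr_natr.
rewrite eD !comp_mpolyX; split => //; rewrite h2; apply: eq_bigr => k _.
by rewrite tnth_map tnth_ord_tuple (ubwX_pow (m k) (@hF k)).2.
Qed.

Lemma comp_ubw b P : ubw v2 b P ->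
  ubw w b (P \mPo Fp) /\ hcomp w b (P \mPo Fp) = hcomp v2 b P \mPo Fb.
Proof.
move=> hP; rewrite comp_mpolyEX; split.
  apply: ubw_sum => m hm; apply: ubwZ; apply: ub_le (comp_monom m).1.
  exact: ub_msupp hP hm.
rewrite linear_sum hcompE raddf_sum /=; apply: eq_big_seq => m hm.
rewrite linearZ /= comp_mpolyZ.
have := ub_msupp hP hm; rewrite le_eqVlt => /orP[/eqP e|lt].
  by rewrite e eqxx -(comp_monom m).2 e.
rewrite (ub_hcomp0 (comp_monom m).1 lt) scaler0.
by rewrite (lt_eqF lt) scale0r.
Qed.

End Comp.
End W2.


Section J.
Variables (K : fieldType) (n : nat).
Implicit Types (p q P : {mpoly K[n]}) (m : 'X_{1..n}) (F G : n.-tuple {mpoly K[n]}).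

Lemma comp_mpolyA p F G :
  (p \mPo F) \mPo G = p \mPo [tuple (tnth F k \mPo G) | k < n].
Proof.
rewrite (comp_mpolyEX p F) (comp_mpolyEX p) raddf_sum; apply: eq_bigr => m _.
rewrite -[LHS]/(comp_mpoly G (p@_m *: ('X_[m] \mPo F))) comp_mpolyZ !comp_mpolyX rmorph_prod; congr (_ *: _); apply: eq_bigr => k _.
by rewrite rmorphXn tnth_map tnth_ord_tuple.
Qed.

Lemma mderivXU (k j : 'I_n) : ('X_k : {mpoly K[n]})^`M(j) = (k == j)%:R.
Proof.
rewrite mderivX mnm1E; case: eqP => [<-|_]; last by rewrite scale0r.
have -> : (U_(k) - U_(k))%MM = 0%MM by apply/mnmP => l; rewrite mnmBE mnm0E subnn.
by rewrite mpolyX0 scale1r.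
Qed.

Definition Ch G p := forall l, (p \mPo G)^`M(l) = \sum_(j < n) (p^`M(j) \mPo G) * (tnth G j)^`M(l).

Lemma Ch0 G : Ch G 0.
Proof. by move=> l; rewrite comp_mpoly0 mderiv0 big1 // => j _; rewrite mderiv0 comp_mpoly0 mul0r. Qed.

Lemma Ch1 G : Ch G 1.
Proof.
move=> l; rewrite comp_mpoly1 -mpolyC1 mderivC big1 // => j _.
by rewrite mderivC comp_mpoly0 mul0r.
Qed.

Lemma ChD G p q : Ch G p -> Ch G q -> Ch G (p + q).
Proof.
move=> hp hq l; rewrite comp_mpolyD mderivD hp hq -big_split /=.
by apply: eq_bigr => j _; rewrite mderivD comp_mpolyD mulrDl.
Qed.

Lemma ChZ G c p : Ch G p -> Ch G (c *: p).
Proof.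
move=> hp l; rewrite comp_mpolyZ mderivZ hp scaler_sumr; apply: eq_bigr => j _.
by rewrite mderivZ comp_mpolyZ scalerAl.
Qed.

Lemma ChM G p q : Ch G p -> Ch G q -> Ch G (p * q).
Proof.
move=> hp hq l; rewrite rmorphM /= mderivM hp hq big_distrl big_distrr -big_split /=.
apply: eq_bigr => j _; rewrite mderivM comp_mpolyD !rmorphM /=; ring.
Qed.

Lemma ChX G k : Ch G 'X_k.
Proof.
move=> l; rewrite comp_mpolyXU -tnth_nth (bigD1 k) //= mderivXU eqxx comp_mpoly1 mul1r.
rewrite big1 ?addr0 // => j /negbTE; rewrite mderivXU eq_sym => ->.
by rewrite comp_mpoly0 mul0r.
Qed.

Lemma ChXm G m : Ch G 'X_[m].
Proof.
rewrite mpolyXE_id; elim: (index_enum 'I_n) => [|k s IH]; first by rewrite big_nil; exact: Ch1.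
rewrite big_cons; apply: ChM => //; elim: (m k) => [|e IHe]; first by rewrite expr0; exact: Ch1.
by rewrite exprS; apply: ChM => //; exact: ChX.
Qed.

Lemma chain G p : Ch G p.
Proof.
elim/mpolyind: p => [|c m p _ _ IH]; first exact: Ch0.
by apply: ChD => //; apply: ChZ; apply: ChXm.
Qed.

Section Det.
Variable (A : 'M[{mpoly K[n]}]_n) (i : 'I_n).
Let mk (r : 'rV[{mpoly K[n]}]_n) := \matrix_(k, l) if k == i then r 0 l else A k l.
Let f r := \det (mk r).

Let row_mk r : row i (mk r) = r.
Proof. by apply/rowP => l; rewrite !mxE eqxx. Qed.

Let row'_mk r r' : row' i (mk r) = row' i (mk r').
Proof. by apply/matrixP => k l; rewrite !mxE eq_sym (negbTE (neq_lift i k)). Qed.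

Let fD b r r' : f (b *: r + r') = b * f r + 1 * f r'.
Proof. apply: determinant_multilinear; rewrite ?row_mk ?scale1r //; first by apply/rowP => l; rewrite !mxE eqxx. Qed.

Let f0 : f 0 = 0.
Proof.
have h := fD 1 0 0; rewrite scale1r addr0 !mul1r in h.
by apply: (addrI (f 0)); rewrite addr0 -h.
Qed.

Lemma det_rowlin (c : 'I_n -> {mpoly K[n]}) :
  \det (\matrix_(k, l) if k == i then \sum_(j < n) c j * A j l else A k l) = c i * \det A.
Proof.
have -> : \matrix_(k, l) (if k == i then \sum_(j < n) c j * A j l else A k l)
   = mk (\sum_(j < n) c j *: row j A).
  apply/matrixP => k l; rewrite !mxE; case: ifP => // _; rewrite summxE.
  by apply: eq_bigr => j _; rewrite !mxE.
have -> : mk (\sum_(j < n) c j *: row j A) = mk (\sum_(j <- index_enum 'I_n) c j *: row j A) by [].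
have H s : f (\sum_(j <- s) c j *: row j A) = \sum_(j <- s) c j * f (row j A).
  elim: s => [|j s IH]; first by rewrite !big_nil f0.
  by rewrite !big_cons fD mul1r IH.
rewrite -/(f _) H (bigD1 i) //= big1 ?addr0.
  congr (_ * _); rewrite /f; congr (\det _); apply/matrixP => k l; rewrite !mxE.
  by case: eqP => // ->.
move=> j nji; rewrite /f (@determinant_alternate _ _ _ i j) ?mulr0 //; first by rewrite eq_sym.
by move=> l; rewrite !mxE eqxx (negbTE nji).
Qed.
End Det.

Definition JM G := \matrix_(k, l) (tnth G k)^`M(l).

Lemma Delta_comp G i q :
  Delta G i (q \mPo G) = (q^`M(i) \mPo G) * jac G.
Proof.
rewrite /Delta /jac -/(JM G) -(det_rowlin (JM G) i (fun j => q^`M(j) \mPo G)); congr (\det _); apply/matrixP => k l.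
rewrite !mxE tnth_map tnth_ord_tuple; case: ifP => // _.
by rewrite chain; apply: eq_bigr => j _; rewrite mxE.
Qed.

Lemma jac_const F G : (forall k, tnth F k \mPo G = 'X_k) -> jac G = ((jac G)@_0)%:MP.
Proof.
move=> FG.
pose M := \matrix_(k, j) ((tnth F k)^`M(j) \mPo G).
have e1 : M *m JM G = 1%:M.
  apply/matrixP => k l; rewrite mxE [RHS]mxE.
  have := chain G (tnth F k) l; rewrite FG mderivXU => ->.
  by apply: eq_bigr => j _; rewrite !mxE.
have : \det M * jac G = 1 by rewrite /jac -/(JM G) -det_mulmx e1 det1.
by move/mpoly_intro_unit => /andP[/eqP].
Qed.

End J.


Section Gen.
Variables (K : fieldType) (n : nat).

Lemma nil_gen (f : {mpoly K[n]} -> {mpoly K[n]}) :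
  (forall P Q, f (P + Q) = f P + f Q) -> (forall c P, f (c *: P) = c *: f P) ->
  (forall m, exists k, iter k f 'X_[m] = 0) -> forall P, exists k, iter k f P = 0.
Proof.
move=> fD fZ hX.
have f0 : f 0 = 0 by rewrite -(scale0r 0) fZ !scale0r.
have iD k P Q : iter k f (P + Q) = iter k f P + iter k f Q.
  by elim: k => //= k ->; rewrite fD.
have iZ k c P : iter k f (c *: P) = c *: iter k f P.
  by elim: k => //= k ->; rewrite fZ.
have i0 k : iter k f 0 = 0 by elim: k => //= k ->.
elim/mpolyind => [|c m p _ _ [k2 h2]]; first by exists 0%N.
have [k1 h1] := hX m; exists (k1 + k2)%N.
rewrite iD iZ {1}addnC !iterD h1 h2 !i0 scaler0 addr0 //.
Qed.

Lemma mderiv_nil (i : 'I_n) (q : {mpoly K[n]}) : exists k, iter k (mderiv i) q = 0.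
Proof.
apply: nil_gen => [P Q|c P|m]; [exact: mderivD|exact: mderivZ|].
exists (m i).+1; rewrite -mderivn_iter mderivnX ffact_small ?scale0r //.
Qed.

Lemma S_any (T : 'X_{1..n} -> {mpoly K[n]}) (P : {mpoly K[n]}) s :
  uniq s -> {subset msupp P <= s} ->
  \sum_(m <- msupp P) P@_m *: T m = \sum_(m <- s) P@_m *: T m.
Proof.
move=> us sub; rewrite [RHS](bigID (mem (msupp P))) /= [X in _ = _ + X]big1 ?addr0.
  rewrite -[RHS]big_filter; apply: perm_big; apply: uniq_perm.
  - exact: msupp_uniq.
  - exact: filter_uniq.
  by move=> x; rewrite mem_filter; case: (boolP (x \in msupp P)) => // /sub ->.
by move=> m hm; rewrite memN_msupp_eq0 ?scale0r.
Qed.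

Lemma S_D (T : 'X_{1..n} -> {mpoly K[n]}) (P Q : {mpoly K[n]}) :
  \sum_(m <- msupp (P + Q)) (P + Q)@_m *: T m =
  \sum_(m <- msupp P) P@_m *: T m + \sum_(m <- msupp Q) Q@_m *: T m.
Proof.
set s := undup (msupp P ++ msupp Q).
have us : uniq s by exact: undup_uniq.
rewrite !(@S_any T _ s) //.
- by rewrite -big_split /=; apply: eq_bigr => m _; rewrite mcoeffD scalerDl.
- by move=> m hm; rewrite mem_undup mem_cat hm orbT.
- by move=> m hm; rewrite mem_undup mem_cat hm.
- by move=> m /msuppD_le; rewrite mem_undup.
Qed.

Lemma S_Z (T : 'X_{1..n} -> {mpoly K[n]}) c (P : {mpoly K[n]}) :
  \sum_(m <- msupp (c *: P)) (c *: P)@_m *: T m = c *: \sum_(m <- msupp P) P@_m *: T m.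
Proof.
rewrite (@S_any T _ (msupp P)) ?msupp_uniq //; last exact: msuppZ_le.
by rewrite scaler_sumr; apply: eq_bigr => m _; rewrite mcoeffZ scalerA.
Qed.

End Gen.


Section Main.
Variables (K : fieldType) (R : realFieldType) (n : nat) (w : 'I_n -> R).
Variables (F G : n.-tuple {mpoly K[n]}) (FG : poly_inverse F G) (i : 'I_n) (r : R).
Let w2 : 'I_n -> R := [ffun k => wdeg w (tnth F k)].
Hypothesis hr : is_der_deg w2 (Delta G i) r.
Hypothesis hri : - w i <= r.

Let D := Delta G i.
Let c := (jac G)@_0.
Let L := lead_der w2 D r.

Lemma compFG (P : {mpoly K[n]}) : (P \mPo F) \mPo G = P.
Proof.
rewrite comp_mpolyA -[RHS]comp_mpoly_id; congr (_ \mPo _).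
by apply: eq_from_tnth => k; rewrite !tnth_map !tnth_ord_tuple FG.1.
Qed.

Lemma compGF (P : {mpoly K[n]}) : (P \mPo G) \mPo F = P.
Proof.
rewrite comp_mpolyA -[RHS]comp_mpoly_id; congr (_ \mPo _).
by apply: eq_from_tnth => k; rewrite !tnth_map !tnth_ord_tuple FG.2.
Qed.

Lemma DE P : D P = c *: ((P \mPo F)^`M(i) \mPo G).
Proof.
rewrite /D -{1}(compFG P) Delta_comp mulrC (jac_const FG.1) mul_mpolyC //.
Qed.

Lemma DG q : D (q \mPo G) = c *: (q^`M(i) \mPo G).
Proof. by rewrite DE compGF. Qed.

Lemma DD P Q : D (P + Q) = D P + D Q.
Proof. by rewrite !DE comp_mpolyD mderivD comp_mpolyD scalerDr. Qed.

Lemma DZ a P : D (a *: P) = a *: D P.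
Proof. by rewrite !DE comp_mpolyZ mderivZ comp_mpolyZ !scalerA mulrC. Qed.

Lemma D0 : D 0 = 0.
Proof. by rewrite -(scale0r 0) DZ !scale0r. Qed.

Lemma D_sum (s : seq 'X_{1..n}) (f : 'X_{1..n} -> {mpoly K[n]}) :
  D (\sum_(m <- s) f m) = \sum_(m <- s) D (f m).
Proof. elim: s => [|m s IH]; rewrite ?big_nil ?D0 // !big_cons DD IH //. Qed.

Lemma iter_DG k q : iter k D (q \mPo G) = c ^+ k *: (iter k (mderiv i) q \mPo G).
Proof.
elim: k => [|k IH]; first by rewrite expr0 scale1r.
by rewrite iterS IH -comp_mpolyZ DG mderivZ comp_mpolyZ scalerA exprS.
Qed.

Lemma D_nil P : exists k, iter k D P = 0.
Proof.
have [k hk] := mderiv_nil i (P \mPo F); exists k.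
by rewrite -(compFG P) iter_DG hk comp_mpoly0 scaler0.
Qed.

Lemma D_ub b Q : ubw w2 b Q -> ubw w2 (b + r) (D Q).
Proof.
move=> hQ; have [->|nzQ] := eqVneq Q 0; first by rewrite D0; exact: ubw0.
have [->|nzD] := eqVneq (D Q) 0; first exact: ubw0.
have h1 := hr.1 Q nzQ nzD; have h2 := wdeg_le nzQ hQ.
apply: (ub_le _ (@ub_wdeg K R n w2 (D Q))); rewrite -(subrK (wdeg w2 Q) (wdeg w2 (D Q))) addrC lerD //.
Qed.

Lemma D_lt b Q : ltw w2 b Q -> ltw w2 (b + r) (D Q).
Proof.
move=> hQ; have [->|nzQ] := eqVneq Q 0; first by rewrite D0 => m _; rewrite mcoeff0.
have [->|nzD] := eqVneq (D Q) 0; first by move=> m _; rewrite mcoeff0.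
have h1 := hr.1 Q nzQ nzD; have h2 := wdeg_lt nzQ hQ.
move=> m hm; apply: (@ub_wdeg K R n w2 (D Q)); apply: lt_le_trans hm.
by have := ltr_leD h2 h1; rewrite addrC subrK.
Qed.

Lemma iterD_ub e H k : ubw w2 e H -> ubw w2 (e + k%:R * r) (iter k D H).
Proof.
move=> hH; elim: k => [|k IH]; first by rewrite mul0r addr0.
by rewrite iterS -natr1 mulrDl mul1r addrA; apply: D_ub.
Qed.

Lemma LD P Q : L (P + Q) = L P + L Q.
Proof. exact: S_D. Qed.

Lemma LZ a P : L (a *: P) = a *: L P.
Proof. exact: S_Z. Qed.

Lemma L0 : L 0 = 0.
Proof. by rewrite -(scale0r 0) LZ !scale0r. Qed.

Lemma L_homog e H : hcomp w2 e H = H -> L H = hcomp w2 (r + e) (D H).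
Proof.
move=> hH; rewrite /L /lead_der.
rewrite [in RHS](mpolyE H) D_sum linear_sum /=; apply: eq_big_seq => m hm.
rewrite DZ linearZ /=; congr (_ *: hcomp _ (r + _) _).
move: hm; rewrite mcoeff_msupp -hH mcoeff_hcomp; case: ifP => [/eqP //|]; by rewrite eqxx.
Qed.

Lemma iterL e H k : hcomp w2 e H = H ->
  iter k L H = hcomp w2 (e + k%:R * r) (iter k D H).
Proof.
move=> hH; elim: k => [|k IH]; first by rewrite mul0r addr0 /= hH.
set b := e + k%:R * r; set X := iter k D H.
have ubX : ubw w2 b X by apply: iterD_ub; rewrite -hH; exact: hcomp_homog.
rewrite iterS IH (L_homog (hcompK _ _ _)).
have -> : e + k.+1%:R * r = r + b by rewrite /b -natr1 mulrDl mul1r; lra.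
have eX : D X = D (hcomp w2 b X) + D (X - hcomp w2 b X) by rewrite -DD addrC subrK.
rewrite iterS -/X eX hcompD.
by rewrite (lt_hcomp0 (D_lt (ub_sub_hcomp ubX))) ?addr0 // addrC.
Qed.

Lemma L_nil P : exists k, iter k L P = 0.
Proof.
apply: nil_gen => [|a Q|m]; [exact: LD|exact: LZ|].
have [k hk] := D_nil 'X_[m]; exists k.
have hX : hcomp w2 (mwdeg w2 m) 'X_[K, m] = 'X_[m].
  by rewrite hcompX eqxx.
by rewrite (iterL _ hX) hk linear0.
Qed.


Let fb := [tuple wlead w (tnth F k) | k < n].

Lemma fbE : fb = [tuple hcomp w (w2 k) (tnth F k) | k < n].
Proof. by apply: eq_from_tnth => k; rewrite !tnth_map /wlead /w2 ffunE. Qed.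

Lemma hF (k : 'I_n) : ubw w (w2 k) (tnth F k).
Proof. rewrite /w2 ffunE; exact: ub_wdeg. Qed.

Lemma hfb (k : 'I_n) : ubw w (w2 k) (tnth fb k).
Proof. rewrite fbE tnth_map tnth_ord_tuple; exact: hcomp_homog. Qed.

Lemma fbK : [tuple hcomp w (w2 k) (tnth fb k) | k < n] = fb.
Proof.
by apply: eq_from_tnth => k; rewrite tnth_map tnth_ord_tuple {2}fbE fbE !tnth_map !tnth_ord_tuple hcompK.
Qed.

Lemma CF b P : ubw w2 b P ->
  ubw w b (P \mPo F) /\ hcomp w b (P \mPo F) = hcomp w2 b P \mPo fb.
Proof. rewrite fbE; exact: (comp_ubw (@hF)). Qed.

Lemma CFb b P : ubw w2 b P ->
  ubw w b (P \mPo fb) /\ hcomp w b (P \mPo fb) = hcomp w2 b P \mPo fb.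
Proof. rewrite -{3}fbK; exact: (comp_ubw (@hfb)). Qed.

Lemma G1 P e : hcomp w e (P \mPo fb) = hcomp w2 e P \mPo fb.
Proof.
rewrite comp_mpolyEX linear_sum hcompE raddf_sum /=; apply: eq_bigr => m _.
rewrite linearZ comp_mpolyZ /=.
have [_ h2] := CFb (@ubwX K R n w2 m).
rewrite hcompX eqxx in h2.
have [<-|ne] := eqVneq (mwdeg w2 m) e; first by rewrite h2.
by rewrite scale0r -h2 hcomp_other ?scaler0 // eq_sym.
Qed.

Definition degs (P : {mpoly K[n]}) := undup [seq mwdeg w2 m | m <- msupp P].

Lemma decomp P : P = \sum_(e <- degs P) hcomp w2 e P.
Proof.
apply/mpolyP => m; rewrite raddf_sum /=; under eq_bigr do rewrite mcoeff_hcomp.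
case: (boolP (mwdeg w2 m \in degs P)) => hd.
  rewrite (bigD1_seq (mwdeg w2 m)) ?undup_uniq //= eqxx big1 ?addr0 //.
  by move=> e ne; case: eqP => // h; rewrite h eqxx in ne.
rewrite big1_seq => [|e /andP[_ he]].
  apply: memN_msupp_eq0; apply: contraNN hd => hm; rewrite mem_undup; exact: map_f.
by case: eqP => // h; move: hd; rewrite h he.
Qed.

Lemma L_sum (s : seq R) (f : R -> {mpoly K[n]}) :
  L (\sum_(e <- s) f e) = \sum_(e <- s) L (f e).
Proof. elim: s => [|x s IH]; rewrite ?big_nil ?L0 // !big_cons LD IH //. Qed.

Lemma deriv_lt b (q : {mpoly K[n]}) : ltw w b q -> ltw w (b - w i) (q^`M(i)).
Proof.
move=> h m hm; rewrite mcoeff_mderiv h ?mul0rn //.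
by rewrite mwdegD mwdegU -lerBlDr.
Qed.

Lemma L_inv Q : Q \mPo fb = 0 -> L Q \mPo fb = 0.
Proof.
move=> hQ; rewrite (decomp Q) L_sum raddf_sum big1 // => e _.
set H := hcomp w2 e Q.
have hH : hcomp w2 e H = H by exact: hcompK.
have H0 : H \mPo fb = 0 by rewrite /H -G1 hQ linear0.
rewrite (L_homog hH).
have ubH : ubw w2 e H by rewrite -hH; exact: hcomp_homog.
have [u1 u2] := CF ubH; rewrite hH H0 in u2.
have lt1 := ub_lt u1 u2.
have lt2 := deriv_lt lt1.
have lt3 : ltw w (e + r) (D H \mPo F).
  rewrite DE comp_mpolyZ compGF; apply: ltwZ; apply: (lt_le _ lt2).
  by rewrite lerD2l.
have [_ v2] := CF (D_ub ubH).
rewrite -[LHS]/(hcomp w2 (r + e) (D H) \mPo fb) addrC -v2.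
by apply: lt_hcomp0 lt3 (lexx _).
Qed.

End Main.

Unset Implicit Arguments.
Theorem lemma6 (K : closedFieldType) (R : realFieldType) (n : nat)
  (Kchar0 : [pchar K] =i pred0)
  (w : 'I_n -> R) (w_pos : forall k, 0 < w k)
  (F G : n.-tuple {mpoly K[n]}) (FG : poly_inverse F G)
  (i : 'I_n) (r : R)
  (hr : is_der_deg [ffun k => wdeg w (tnth F k)] (Delta G i) r)
  (hri : - w i <= r) :
  let w2 := [ffun k => wdeg w (tnth F k)] in
  let I := fun Q : {mpoly K[n]} =>
             Q \mPo [tuple wlead w (tnth F k) | k < n] = 0 in
  locally_nilpotent (lead_der w2 (Delta G i) r) /\
  (forall Q, I Q -> I (lead_der w2 (Delta G i) r Q)).
Proof.
move=> w2 I; split.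
- move=> P; exact: (L_nil FG hr P).
- move=> Q hQ; exact: (L_inv FG hr hri hQ).
Qed.
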